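(* Assume (H1). Let $\mathcal H=\begin{pmatrix}A+G&\gamma I\\-\widehat Q&-(A+G)^T\end{pmatrix}\in\mathbb R^{2n\times 2n}$ and $\Phi(t)=e^{\mathcal Ht}=\begin{pmatrix}\Phi_{11}(t)&\Phi_{12}(t)\\\Phi_{21}(t)&\Phi_{22}(t)\end{pmatrix}$ with $n\times n$ blocks. Then $\Phi_{22}(T)-H\Phi_{12}(T)$ is nonsingular.
   Context: Fix $n\ge1$, $T>0$, constant matrices $A,G,\Gamma\in\mathbb R^{n\times n}$, $\gamma>0$, symmetric $Q\ge0$, $H\ge0$ ($n\times n$). Write $\widehat Q=(I-\Gamma)^TQ(I-\Gamma)$ and $\|h\|_{L^2}=(\int_0^T|h|^2dt)^{1/2}$. For $g\in L^2(0,T;\mathbb R^n)$ let $\dot z=(A+G)z+g$, $z(0)=0$, and $\bar J''(g)=\int_0^T\{-z^T\widehat Qz+\frac1\gamma|g|^2\}dt-z(T)^THz(T)$. (H1): there exists $\epsilon_0>0$ with $\bar J''(g)\ge\epsilon_0\|g\|_{L^2}^2$ for all $g\in L^2(0,T;\mathbb R^n)$. *)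

(* Defs.v *)
From Stdlib Require Import Reals Lra ClassicalEpsilon Factorial.
Open Scope R_scope.

(* Vectors in R^m are functions nat -> R (only indices < m matter);
   m x m matrices are functions nat -> nat -> R (only indices < m matter). *)
Definition vec := nat -> R.
Definition mat := nat -> nat -> R.

Fixpoint rsum (m : nat) (f : nat -> R) : R :=
  match m with O => 0 | S k => rsum k f + f k end.

Definition delta (i j : nat) : R := if Nat.eqb i j then 1 else 0.
Definition mat_id : mat := fun i j => delta i j.
Definition mat_add (A B : mat) : mat := fun i j => A i j + B i j.
Definition mat_sub (A B : mat) : mat := fun i j => A i j - B i j.
Definition mat_opp (A : mat) : mat := fun i j => - A i j.
Definition mat_tr (A : mat) : mat := fun i j => A j i.
Definition mat_mul (m : nat) (A B : mat) : mat :=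
  fun i j => rsum m (fun k => A i k * B k j).
Definition mat_vec (m : nat) (A : mat) (x : vec) : vec :=
  fun i => rsum m (fun k => A i k * x k).
Fixpoint mat_pow (m : nat) (A : mat) (k : nat) : mat :=
  match k with O => mat_id | S k' => mat_mul m A (mat_pow m A k') end.

Definition qform (m : nat) (M : mat) (x : vec) : R :=
  rsum m (fun i => rsum m (fun j => x i * M i j * x j)).
Definition sqnorm (m : nat) (x : vec) : R := rsum m (fun i => x i * x i).

Definition symmetric (m : nat) (M : mat) : Prop :=
  forall i j, (i < m)%nat -> (j < m)%nat -> M i j = M j i.
Definition psd (m : nat) (M : mat) : Prop := forall x, 0 <= qform m M x.

Definition nonsingular (m : nat) (M : mat) : Prop :=
  exists N : mat, forall i j, (i < m)%nat -> (j < m)%nat ->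
    mat_mul m N M i j = delta i j /\ mat_mul m M N i j = delta i j.

Definition matexp (m : nat) (M : mat) (t : R) : mat :=
  fun i j => epsilon (inhabits 0)
    (fun l => infinite_sum (fun k => t ^ k / INR (fact k) * mat_pow m M k i j) l).

Definition Qhat (n : nat) (Gm Q : mat) : mat :=
  mat_mul n (mat_tr (mat_sub mat_id Gm)) (mat_mul n Q (mat_sub mat_id Gm)).

(* the 2n x 2n Hamiltonian matrix [[A+G, gamma I]; [-Qhat, -(A+G)^T]] *)
Definition Hcal (n : nat) (A G Gm Q : mat) (gamma : R) : mat :=
  fun i j =>
    if Nat.ltb i n then
      (if Nat.ltb j n then mat_add A G i j else gamma * delta i (j - n)%nat)
    else
      (if Nat.ltb j n then - Qhat n Gm Q (i - n)%nat j
       else - mat_add A G (j - n)%nat (i - n)%nat).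

Definition blk12 (n : nat) (P : mat) : mat := fun i j => P i (j + n)%nat.
Definition blk22 (n : nat) (P : mat) : mat := fun i j => P (i + n)%nat (j + n)%nat.

(* Hypothesis (H1), quantified over continuous controls g:
   for g continuous and z the solution of z' = (A+G) z + g, z(0) = 0,
   Jbar''(g) = int_0^T (- z^T Qhat z + |g|^2/gamma) dt - z(T)^T H z(T)
   >= eps0 * ||g||_{L^2}^2. *)
Definition H1 (n : nat) (T : R) (A G Gm : mat) (gamma : R) (Q H : mat) : Prop :=
  exists eps0 : R, 0 < eps0 /\
    forall (g z : R -> vec),
      (forall i, (i < n)%nat -> continuity (fun t => g t i)) ->
      (forall i t, (i < n)%nat ->
         derivable_pt_lim (fun s => z s i) t
           (mat_vec n (mat_add A G) (z t) i + g t i)) ->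
      (forall i, (i < n)%nat -> z 0 i = 0) ->
      forall (prJ : Riemann_integrable
                (fun t => - qform n (Qhat n Gm Q) (z t) + / gamma * sqnorm n (g t)) 0 T)
             (prg : Riemann_integrable (fun t => sqnorm n (g t)) 0 T),
        RiemannInt prJ - qform n H (z T) >= eps0 * RiemannInt prg.

(* Main.v *)
Require Import Defs.
From Stdlib Require Import Reals Lra Lia ClassicalEpsilon Classical Factorial.
From Coquelicot Require Import Coquelicot.
Open Scope R_scope.

Lemma rsum_ext m f g : (forall k, (k < m)%nat -> f k = g k) -> rsum m f = rsum m g.
Proof. induction m; simpl; intros H; auto. rewrite IHm, H; auto. Qed.

Lemma rsum_plus m f g : rsum m (fun k => f k + g k) = rsum m f + rsum m g.
Proof. induction m; simpl; [ring| rewrite IHm; ring]. Qed.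

Lemma rsum_scal m c f : rsum m (fun k => c * f k) = c * rsum m f.
Proof. induction m; simpl; [ring| rewrite IHm; ring]. Qed.

Lemma rsum_opp m f : rsum m (fun k => - f k) = - rsum m f.
Proof. induction m; simpl; [ring| rewrite IHm; ring]. Qed.

Lemma rsum_zero m : rsum m (fun _ => 0) = 0.
Proof. induction m; simpl; [ring| rewrite IHm; ring]. Qed.

Lemma rsum_split a b f : rsum (a + b) f = rsum a f + rsum b (fun k => f (a + k)%nat).
Proof. induction b; simpl. rewrite Nat.add_0_r; ring.
 rewrite Nat.add_succ_r; simpl; rewrite IHb; ring. Qed.

Lemma rsum_swap m p f : rsum m (fun i => rsum p (fun j => f i j)) = rsum p (fun j => rsum m (fun i => f i j)).
Proof. induction m; simpl. symmetry; apply rsum_zero.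
 rewrite IHm, <- rsum_plus; reflexivity. Qed.

Lemma rsum_delta m i x : (i < m)%nat -> rsum m (fun k => delta i k * x k) = x i.
Proof. induction m; intros H; simpl. lia.
 unfold delta at 2. destruct (Nat.eqb_spec i m).
 - subst. rewrite (rsum_ext _ _ (fun _ => 0)). rewrite rsum_zero; ring.
   intros k Hk; unfold delta; destruct (Nat.eqb_spec m k); [lia|ring].
 - rewrite IHm by lia; ring. Qed.

Lemma rsum_le m f g : (forall k, (k < m)%nat -> f k <= g k) -> rsum m f <= rsum m g.
Proof. induction m; simpl; intros H. lra. apply Rplus_le_compat; auto. Qed.

Lemma rsum_abs m f : Rabs (rsum m f) <= rsum m (fun k => Rabs (f k)).
Proof. induction m; simpl. rewrite Rabs_R0; lra.
 eapply Rle_trans; [apply Rabs_triang|]. lra. Qed.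

Lemma rsum_nonneg m f : (forall k, (k < m)%nat -> 0 <= f k) -> 0 <= rsum m f.
Proof. intros H. rewrite <- (rsum_zero m). apply rsum_le; auto. Qed.

Lemma rsum_pos m f j : (forall k, (k < m)%nat -> 0 <= f k) -> (j < m)%nat -> 0 < f j -> 0 < rsum m f.
Proof. induction m; simpl; intros H Hj Hf. lia.
 destruct (Nat.eq_dec j m).
 - subst. pose proof (rsum_nonneg m f (fun k Hk => H k ltac:(lia))). lra.
 - pose proof (IHm (fun k Hk => H k ltac:(lia)) ltac:(lia) Hf). pose proof (H m ltac:(lia)). lra. Qed.

Lemma rsum_term_le m f j : (forall k, (k < m)%nat -> 0 <= f k) -> (j < m)%nat -> f j <= rsum m f.
Proof. induction m; simpl; intros H Hj. lia.
 destruct (Nat.eq_dec j m).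
 - subst. pose proof (rsum_nonneg m f (fun k Hk => H k ltac:(lia))). lra.
 - pose proof (IHm (fun k Hk => H k ltac:(lia)) ltac:(lia)). pose proof (H m ltac:(lia)). lra. Qed.

Lemma is_series_zero : is_series (fun _ : nat => 0) 0.
Proof.
  assert (H := is_series_scal_r 0 _ _ (is_series_geom 0 ltac:(rewrite Rabs_R0; lra))).
  replace (/ (1 - 0) * 0) with 0 in H by ring.
  eapply is_series_ext; [|exact H]. intros; simpl; ring.
Qed.

Lemma is_series_rsum m (f : nat -> nat -> R) (L : nat -> R) :
  (forall l, (l < m)%nat -> is_series (f l) (L l)) ->
  is_series (fun k => rsum m (fun l => f l k)) (rsum m L).
Proof.
  induction m; intros H; simpl. apply is_series_zero.
  apply (is_series_plus (fun k => rsum m (fun l => f l k)) (fun k => f m k)).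
  apply IHm; intros; apply H; lia. apply H; lia.
Qed.

Section MExp.
Variable m : nat.
Variable M : mat.

Definition cM : R := rsum m (fun i => rsum m (fun j => Rabs (M i j))).

Lemma cM_ge0 : 0 <= cM.
Proof. apply rsum_nonneg; intros; apply rsum_nonneg; intros; apply Rabs_pos. Qed.

Lemma pow_bound k i j : (i < m)%nat -> (j < m)%nat -> Rabs (mat_pow m M k i j) <= cM ^ k.
Proof.
  revert i j; induction k; intros i j Hi Hj; simpl.
  - unfold mat_id, delta. destruct (Nat.eqb i j); rewrite ?Rabs_R1, ?Rabs_R0; lra.
  - unfold mat_mul. eapply Rle_trans; [apply rsum_abs|].
    apply Rle_trans with (rsum m (fun l => Rabs (M i l) * cM ^ k)).
    + apply rsum_le; intros l Hl. rewrite Rabs_mult.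
      apply Rmult_le_compat_l; [apply Rabs_pos| apply IHk; auto].
    + rewrite (rsum_ext _ _ (fun l => cM ^ k * Rabs (M i l))) by (intros; ring).
      rewrite rsum_scal. rewrite (Rmult_comm cM).
      apply Rmult_le_compat_l. apply pow_le, cM_ge0.
      unfold cM. apply (rsum_term_le m (fun i => rsum m (fun j => Rabs (M i j)))); auto.
      intros; apply rsum_nonneg; intros; apply Rabs_pos.
Qed.

Definition aco (i j : nat) (k : nat) : R := mat_pow m M k i j / INR (fact k).

Lemma aco_disk i j r : (i < m)%nat -> (j < m)%nat ->
  ex_series (fun k => Rabs (aco i j k * r ^ k)).
Proof.
  intros Hi Hj.
  apply (@ex_series_le R_AbsRing R_CompleteNormedModule _ (fun k => / INR (fact k) * (cM * Rabs r) ^ k)).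
  - intros k. change (norm (Rabs (aco i j k * r ^ k))) with (Rabs (Rabs (aco i j k * r ^ k))).
    rewrite Rabs_Rabsolu. unfold aco. rewrite Rpow_mult_distr, Rabs_mult.
    unfold Rdiv. rewrite Rabs_mult, Rabs_inv, (Rabs_pos_eq (INR (fact k))) by (apply pos_INR).
    rewrite <- RPow_abs.
    pose proof (pow_bound k i j Hi Hj). pose proof (pos_INR (fact k)).
    pose proof (INR_fact_neq_0 k). pose proof (pow_le (Rabs r) k (Rabs_pos r)).
    assert (0 < / INR (fact k)) by (apply Rinv_0_lt_compat; lra).
    replace (/ INR (fact k) * (cM ^ k * Rabs r ^ k)) with ((cM ^ k) * (/ INR (fact k) * Rabs r ^ k)) by ring.
    replace (Rabs (mat_pow m M k i j) * / INR (fact k) * Rabs r ^ k) with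
        (Rabs (mat_pow m M k i j) * (/ INR (fact k) * Rabs r ^ k)) by ring.
    apply Rmult_le_compat_r; [|auto]. apply Rmult_le_pos; lra.
  - exists (exp (cM * Rabs r)). apply is_pseries_R, is_exp_Reals.
Qed.

Lemma aco_radius i j x : (i < m)%nat -> (j < m)%nat -> Rbar_lt (Rabs x) (CV_radius (aco i j)).
Proof.
  intros Hi Hj.
  assert (Hr : 0 < Rabs x + 1) by (pose proof (Rabs_pos x); lra).
  apply Rbar_lt_le_trans with (Finite (mkposreal _ Hr)).
  - simpl; lra.
  - apply CV_radius_Reals_1.
    pose proof (Series_correct _ (aco_disk i j (Rabs x + 1) Hi Hj)) as Hl.
    exists (fun k => Rabs (aco i j k * (Rabs x + 1) ^ k)). exists (Series (fun k => Rabs (aco i j k * (Rabs x + 1) ^ k))). split.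
    + apply is_series_Reals in Hl. intros e He. destruct (Hl e He) as [N HN]. exists N.
      intros n Hn. specialize (HN n Hn).
      erewrite (sum_eq _ (fun k => Rabs (aco i j k * (Rabs x + 1) ^ k))); [exact HN|].
      intros; apply Rabs_Rabsolu.
    + intros n y Hy. unfold Boule in Hy; simpl in Hy. rewrite Rminus_0_r in Hy.
      rewrite !Rabs_mult. apply Rmult_le_compat_l; [apply Rabs_pos|].
      rewrite <- !RPow_abs. apply pow_incr. split; [apply Rabs_pos|].
      rewrite (Rabs_pos_eq (Rabs x + 1)) by lra. lra.
Qed.

Definition Phi (i j : nat) (t : R) : R := PSeries (aco i j) t.

Lemma matexp_Phi t i j : (i < m)%nat -> (j < m)%nat -> matexp m M t i j = Phi i j t.
Proof.
  intros Hi Hj. unfold matexp.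
  assert (Hs : infinite_sum (fun k => t ^ k / INR (fact k) * mat_pow m M k i j) (Phi i j t)).
  { apply is_series_Reals. unfold Phi.
    pose proof (PSeries_correct (aco i j) t (CV_radius_inside _ _ (aco_radius i j t Hi Hj))) as H.
    apply is_pseries_R in H. eapply is_series_ext; [|exact H].
    intros k; unfold aco; simpl; field. apply INR_fact_neq_0. }
  pose proof (epsilon_spec (inhabits 0) (fun l => infinite_sum (fun k => t ^ k / INR (fact k) * mat_pow m M k i j) l) (ex_intro _ _ Hs)) as H.
  eapply uniqueness_sum; eauto.
Qed.

Lemma Phi_0 i j : Phi i j 0 = delta i j.
Proof. unfold Phi. rewrite PSeries_0. unfold aco; simpl. unfold mat_id. unfold Rdiv; rewrite Rinv_1. apply Rmult_1_r. Qed.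

Lemma Phi_derive i j (t : R) : (i < m)%nat -> (j < m)%nat ->
  is_derive (Phi i j) t (rsum m (fun l => M i l * Phi l j t)).
Proof.
  intros Hi Hj.
  pose proof (is_derive_PSeries (aco i j) t (aco_radius i j t Hi Hj)) as H.
  unfold Phi. replace (rsum m (fun l => M i l * PSeries (aco l j) t)) with (PSeries (PS_derive (aco i j)) t); [exact H|].
  apply is_pseries_unique. apply is_pseries_R.
  eapply is_series_ext; [|apply (is_series_rsum m (fun l k => M i l * (aco l j k * t ^ k)))].
  - intros k. unfold PS_derive, aco. simpl mat_pow. unfold mat_mul.
    rewrite (rsum_ext _ _ (fun l => (/ INR (fact k) * t ^ k) * (M i l * mat_pow m M k l j))) by (intros; unfold Rdiv; ring).
    rewrite rsum_scal. rewrite fact_simpl, mult_INR. match goal with |- ?a = ?b => change (@eq R a b) end; field.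
    split; [apply INR_fact_neq_0| apply not_0_INR; lia].
  - intros l Hl. apply (@is_series_scal_l R_AbsRing R_NormedModule (M i l) (fun k => aco l j k * t ^ k)).
    pose proof (PSeries_correct (aco l j) t (CV_radius_inside _ _ (aco_radius l j t Hl Hj))) as H2.
    apply is_pseries_R in H2. exact H2.
Qed.

End MExp.

Lemma cont_rsum m (f : nat -> R -> R) x :
  (forall k, (k < m)%nat -> continuity_pt (f k) x) ->
  continuity_pt (fun t => rsum m (fun k => f k t)) x.
Proof.
  induction m; intros H; simpl.
  - apply continuity_pt_const; intros a b; reflexivity.
  - exact (continuity_pt_plus (fun t => rsum m (fun k => f k t)) (f m) x
            (IHm (fun k Hk => H k ltac:(lia))) (H m ltac:(lia))).
Qed.

Lemma cont_mult f g x : continuity_pt f x -> continuity_pt g x -> continuity_pt (fun t => f t * g t) x.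
Proof. intros; exact (continuity_pt_mult f g x H H0). Qed.

Lemma cont_opp f x : continuity_pt f x -> continuity_pt (fun t => - f t) x.
Proof. intros; exact (continuity_pt_opp f x H). Qed.

Lemma cont_plus f g x : continuity_pt f x -> continuity_pt g x -> continuity_pt (fun t => f t + g t) x.
Proof. intros; exact (continuity_pt_plus f g x H H0). Qed.

Lemma cont_const c x : continuity_pt (fun _ => c) x.
Proof. apply continuity_pt_const; intros a b; reflexivity. Qed.

Lemma deriv_cont f x l : is_derive f x l -> continuity_pt f x.
Proof. intros H. apply is_derive_Reals in H. exact (derivable_continuous_pt f x (exist _ l H)). Qed.

Lemma cpt_cont f x : continuity_pt f x -> continuous f x.
Proof. intros H; apply continuity_pt_filterlim; exact H. Qed.

Lemma is_derive_rsum m (f : nat -> R -> R) (df : nat -> R) x :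
  (forall k, (k < m)%nat -> is_derive (f k) x (df k)) ->
  is_derive (fun t => rsum m (fun k => f k t)) x (rsum m df).
Proof.
  induction m; intros H; simpl.
  - apply (is_derive_const (K:=R_AbsRing) (V:=R_NormedModule) 0 x).
  - apply (is_derive_plus (K:=R_AbsRing) (V:=R_NormedModule) (fun t => rsum m (fun k => f k t)) (f m) x).
    apply IHm; intros; apply H; lia. apply H; lia.
Qed.

Lemma is_derive_eq (f : R -> R) (x l l' : R) : is_derive f x l -> l = l' -> is_derive f x l'.
Proof. intros H ->; exact H. Qed.

Lemma is_derive_prod (f g : R -> R) (x df dg : R) : is_derive f x df -> is_derive g x dg ->
  is_derive (fun t => f t * g t) x (df * g x + f x * dg).
Proof.
  intros H1 H2. exact (is_derive_mult f g x df dg H1 H2 Rmult_comm).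
Qed.

Lemma is_derive_mulc (f : R -> R) (c x l : R) : is_derive f x l -> is_derive (fun t => f t * c) x (l * c).
Proof.
  intros H. eapply is_derive_eq. apply (is_derive_prod f (fun _ => c) x l 0 H (is_derive_const c x)). ring.
Qed.

Lemma rsum_mulr m f c : rsum m f * c = rsum m (fun k => f k * c).
Proof. induction m; simpl; [ring| rewrite <- IHm; ring]. Qed.

Lemma rsum_minus m f g : rsum m (fun k => f k - g k) = rsum m f - rsum m g.
Proof. induction m; simpl; [ring| rewrite IHm; ring]. Qed.

Lemma int_pos (f : R -> R) T : 0 < T -> (forall x, continuity_pt f x) -> (forall x, 0 <= f x) -> 0 < f 0 ->
  0 < RInt f 0 T.
Proof.
  intros HT Hc Hnn H0.
  destruct (Hc 0 (f 0 / 2) ltac:(lra)) as [al [Hal Hx]].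
  set (b := Rmin (al / 2) T).
  assert (Hb0 : 0 < b) by (unfold b; apply Rmin_glb_lt; lra).
  assert (HbT : b <= T) by (unfold b; apply Rmin_r).
  assert (Hba : b <= al / 2) by (unfold b; apply Rmin_l).
  assert (Hex : forall a c, ex_RInt f a c) by (intros; apply (@ex_RInt_continuous R_CompleteNormedModule); intros; apply cpt_cont; auto).
  rewrite <- (RInt_Chasles f 0 b T (Hex _ _) (Hex _ _)).
  assert (0 < RInt f 0 b).
  { apply RInt_gt_0; auto.
    - intros x Hxr. assert (R_dist (f x) (f 0) < f 0 / 2).
      { apply Hx. split. split; [exact I| lra]. simpl. unfold R_dist. rewrite Rminus_0_r, Rabs_pos_eq by lra. lra. }
      unfold R_dist in H. apply Rabs_def2 in H. lra.
    - intros; apply cpt_cont; auto. }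
  assert (0 <= RInt f b T) by (apply RInt_ge_0; auto; intros; apply Hnn).
  unfold plus; simpl. change (0 < RInt f 0 b + RInt f b T). lra.
Qed.

Section Main.
Variables (n : nat) (A G Gm Q : mat) (gamma : R) (v : vec).
Let m := (2 * n)%nat.
Let MM := Hcal n A G Gm Q gamma.
Let B := mat_add A G.
Let Qh := Qhat n Gm Q.

Definition ww : vec := fun k => if Nat.ltb k n then 0 else v (k - n)%nat.
Definition XX (i : nat) (t : R) : R := rsum m (fun k => matexp m MM t i k * ww k).

Lemma m_eq : m = (n + n)%nat.
Proof. unfold m; lia. Qed.

Lemma XX_split r t : XX r t = rsum n (fun k => matexp m MM t r (k + n)%nat * v k).
Proof.
  unfold XX. rewrite m_eq at 1. rewrite rsum_split.
  rewrite (rsum_ext n _ (fun _ => 0)). rewrite rsum_zero, Rplus_0_l.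
  - apply rsum_ext; intros k Hk. unfold ww.
    replace (Nat.ltb (n + k) n) with false by (symmetry; apply Nat.ltb_ge; lia).
    replace (n + k - n)%nat with k by lia. rewrite Nat.add_comm. reflexivity.
  - intros k Hk. unfold ww. replace (Nat.ltb k n) with true by (symmetry; apply Nat.ltb_lt; lia). ring.
Qed.

Lemma XX_derive i (t : R) : (i < m)%nat -> is_derive (XX i) t (rsum m (fun l => MM i l * XX l t)).
Proof.
  intros Hi.
  apply is_derive_ext with (f := fun t => rsum m (fun k => Phi m MM i k t * ww k)).
  { intros s. unfold XX. apply rsum_ext; intros k Hk. rewrite matexp_Phi; auto. }
  eapply is_derive_eq.
  apply is_derive_rsum. intros k Hk. apply is_derive_mulc. apply Phi_derive; auto.
  simpl.
  rewrite (rsum_ext m _ (fun k => rsum m (fun l => MM i l * (Phi m MM l k t * ww k)))).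
  2:{ intros k Hk. rewrite rsum_mulr. apply rsum_ext; intros; ring. }
  rewrite rsum_swap. apply rsum_ext; intros l Hl. rewrite rsum_scal. f_equal. unfold XX.
  apply rsum_ext; intros k Hk. rewrite matexp_Phi; auto.
Qed.

Lemma XX_0 i : (i < n)%nat -> XX i 0 = 0.
Proof.
  intros Hi. unfold XX.
  rewrite (rsum_ext m _ (fun k => delta i k * ww k)).
  rewrite rsum_delta by (unfold m; lia). unfold ww. replace (Nat.ltb i n) with true by (symmetry; apply Nat.ltb_lt; lia). reflexivity.
  intros k Hk. rewrite matexp_Phi by (unfold m in *; lia). rewrite Phi_0. reflexivity.
Qed.

Lemma XX_0' i : (i < n)%nat -> XX (i + n) 0 = v i.
Proof.
  intros Hi. unfold XX.
  rewrite (rsum_ext m _ (fun k => delta (i + n) k * ww k)).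
  rewrite rsum_delta by (unfold m; lia). unfold ww. replace (Nat.ltb (i + n) n) with false by (symmetry; apply Nat.ltb_ge; lia).
  f_equal; lia.
  intros k Hk. rewrite matexp_Phi by (unfold m in *; lia). rewrite Phi_0. reflexivity.
Qed.

Lemma Hcal_top i l : (i < n)%nat -> (l < n)%nat -> MM i l = B i l.
Proof. intros. unfold MM, Hcal. replace (Nat.ltb i n) with true by (symmetry; apply Nat.ltb_lt; lia).
  replace (Nat.ltb l n) with true by (symmetry; apply Nat.ltb_lt; lia). reflexivity. Qed.

Lemma Hcal_tr i l : (i < n)%nat -> (l < n)%nat -> MM i (n + l)%nat = gamma * delta i l.
Proof. intros. unfold MM, Hcal. replace (Nat.ltb i n) with true by (symmetry; apply Nat.ltb_lt; lia).
  replace (Nat.ltb (n + l) n) with false by (symmetry; apply Nat.ltb_ge; lia).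
  replace (n + l - n)%nat with l by lia. reflexivity. Qed.

Lemma Hcal_bl i l : (i < n)%nat -> (l < n)%nat -> MM (i + n)%nat l = - Qh i l.
Proof. intros. unfold MM, Hcal. replace (Nat.ltb (i + n) n) with false by (symmetry; apply Nat.ltb_ge; lia).
  replace (Nat.ltb l n) with true by (symmetry; apply Nat.ltb_lt; lia).
  replace (i + n - n)%nat with i by lia. reflexivity. Qed.

Lemma Hcal_br i l : (i < n)%nat -> (l < n)%nat -> MM (i + n)%nat (n + l)%nat = - B l i.
Proof. intros. unfold MM, Hcal. replace (Nat.ltb (i + n) n) with false by (symmetry; apply Nat.ltb_ge; lia).
  replace (Nat.ltb (n + l) n) with false by (symmetry; apply Nat.ltb_ge; lia).
  replace (i + n - n)%nat with i by lia. replace (n + l - n)%nat with l by lia. reflexivity. Qed.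

Lemma z_derive i (t : R) : (i < n)%nat ->
  is_derive (XX i) t (mat_vec n B (fun k => XX k t) i + gamma * XX (i + n) t).
Proof.
  intros Hi. eapply is_derive_eq. apply XX_derive. unfold m; lia.
  rewrite m_eq, rsum_split. f_equal.
  - apply rsum_ext; intros l Hl. rewrite Hcal_top; auto.
  - rewrite (rsum_ext n _ (fun l => delta i l * (gamma * XX (l + n) t))).
    apply rsum_delta; auto.
    intros l Hl. rewrite Hcal_tr by auto. rewrite (Nat.add_comm n l). ring.
Qed.

Lemma p_derive i (t : R) : (i < n)%nat ->
  is_derive (XX (i + n)) t (rsum n (fun l => - Qh i l * XX l t) + rsum n (fun l => - B l i * XX (l + n) t)).
Proof.
  intros Hi. eapply is_derive_eq. apply XX_derive. unfold m; lia.
  rewrite m_eq, rsum_split. f_equal.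
  - apply rsum_ext; intros l Hl. rewrite Hcal_bl; auto.
  - apply rsum_ext; intros l Hl. rewrite Hcal_br by auto. rewrite (Nat.add_comm n l). ring.
Qed.

End Main.

Lemma alg_id n (B Qh : mat) (z p : vec) (gamma : R) : gamma <> 0 ->
  rsum n (fun i => (mat_vec n B z i + gamma * p i) * p i
     + z i * (rsum n (fun l => - Qh i l * z l) + rsum n (fun l => - B l i * p l)))
  = - qform n Qh z + / gamma * sqnorm n (fun i => gamma * p i).
Proof.
  intros Hg.
  rewrite (rsum_ext n _ (fun i => (rsum n (fun l => B i l * z l * p i) + rsum n (fun l => z i * (- Qh i l * z l)))
            + rsum n (fun l => z i * (- B l i * p l)) + gamma * (p i * p i))).
  2:{ intros i Hi. unfold mat_vec. rewrite Rmult_plus_distr_r, Rmult_plus_distr_l, rsum_mulr, <- !rsum_scal. ring. }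
  rewrite !rsum_plus.
  assert (E3 : rsum n (fun i => rsum n (fun l => z i * (- B l i * p l))) = - rsum n (fun i => rsum n (fun l => B i l * z l * p i))).
  { rewrite rsum_swap, <- rsum_opp. apply rsum_ext; intros i Hi. rewrite <- rsum_opp. apply rsum_ext; intros; ring. }
  rewrite E3. unfold qform, sqnorm.
  rewrite (rsum_ext n (fun i => rsum n (fun l => z i * (- Qh i l * z l))) (fun i => - rsum n (fun j => z i * Qh i j * z j))).
  2:{ intros i Hi. rewrite <- rsum_opp. apply rsum_ext; intros; ring. }
  rewrite rsum_opp.
  rewrite (rsum_ext n (fun i => gamma * p i * (gamma * p i)) (fun i => (gamma * gamma) * (p i * p i))) by (intros; ring).
  rewrite !rsum_scal. field. auto.
Qed.

Lemma kernel_zero (n : nat) (T : R) (A G Gm : mat) (gamma : R) (Q H : mat)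
  (hT : 0 < T) (hgamma : 0 < gamma) (hH1 : H1 n T A G Gm gamma Q H) :
  forall v : vec,
   (forall i, lt i n -> mat_vec n (mat_sub (blk22 n (matexp (2 * n)%nat (Hcal n A G Gm Q gamma) T))
             (mat_mul n H (blk12 n (matexp (2 * n)%nat (Hcal n A G Gm Q gamma) T)))) v i = R0) ->
   forall j, lt j n -> v j = R0.
Proof.
  intros v Hv.
  set (X := XX n A G Gm Q gamma v).
  set (z := fun (t : R) (i : nat) => X i t).
  set (g := fun (t : R) (i : nat) => gamma * X (i + n)%nat t).
  destruct hH1 as [eps [Heps HH]].
  assert (Xc : forall i t, (i < 2 * n)%nat -> continuity_pt (X i) t).
  { intros i t Hi. eapply deriv_cont. apply XX_derive. exact Hi. }
  assert (Hgc : forall i, (i < n)%nat -> continuity (fun t => g t i)).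
  { intros i Hi t. apply cont_mult. apply cont_const. apply Xc; lia. }
  assert (Hzd : forall i t, (i < n)%nat ->
         derivable_pt_lim (fun s => z s i) t (mat_vec n (mat_add A G) (z t) i + g t i)).
  { intros i t Hi. apply is_derive_Reals. apply z_derive; auto. }
  assert (Hz0 : forall i, (i < n)%nat -> z 0 i = 0).
  { intros i Hi. apply XX_0; auto. }
  set (J := fun t => - qform n (Qhat n Gm Q) (z t) + / gamma * sqnorm n (g t)).
  set (S := fun t => sqnorm n (g t)).
  assert (Jc : forall t, continuity_pt J t).
  { intros t. unfold J, qform, sqnorm. apply cont_plus.
    - apply cont_opp. apply cont_rsum; intros i Hi. apply cont_rsum; intros j Hj.
      apply cont_mult. apply cont_mult. apply Xc; lia. apply cont_const. apply Xc; lia.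
    - apply cont_mult. apply cont_const. apply cont_rsum; intros i Hi.
      apply cont_mult; apply cont_mult; try apply cont_const; apply Xc; lia. }
  assert (Sc : forall t, continuity_pt S t).
  { intros t. unfold S, sqnorm. apply cont_rsum; intros i Hi.
      apply cont_mult; apply cont_mult; try apply cont_const; apply Xc; lia. }
  assert (exJ : ex_RInt J 0 T).
  { apply (@ex_RInt_continuous R_CompleteNormedModule); intros; apply cpt_cont; auto. }
  assert (exS : ex_RInt S 0 T).
  { apply (@ex_RInt_continuous R_CompleteNormedModule); intros; apply cpt_cont; auto. }
  set (prJ := ex_RInt_Reals_0 J 0 T exJ).
  set (prg := ex_RInt_Reals_0 S 0 T exS).
  specialize (HH g z Hgc Hzd Hz0 prJ prg).
  set (F := fun t => rsum n (fun i => X i t * X (i + n)%nat t)).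
  assert (Fd : forall t, is_derive F t (J t)).
  { intros t. unfold F. eapply is_derive_eq.
    apply is_derive_rsum. intros i Hi. apply is_derive_prod. apply z_derive; auto. apply p_derive; auto.
    unfold J. exact (alg_id n (mat_add A G) (Qhat n Gm Q) (z t) (fun i => X (i + n)%nat t) gamma ltac:(lra)). }
  assert (HI : RInt J 0 T = F T - F 0).
  { apply is_RInt_unique. apply (@is_RInt_derive R_CompleteNormedModule F J 0 T).
    intros; apply Fd. intros; apply cpt_cont; auto. }
  assert (F0 : F 0 = 0).
  { unfold F. rewrite (rsum_ext n _ (fun _ => 0)). apply rsum_zero.
    intros i Hi. unfold X. rewrite XX_0 by auto. ring. }
  assert (Hp : forall i, (i < n)%nat -> X (i + n)%nat T = rsum n (fun l => H i l * X l T)).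
  { intros i Hi. specialize (Hv i Hi). unfold mat_vec, mat_sub, blk22, mat_mul, blk12 in Hv.
    unfold X. rewrite XX_split.
    rewrite (rsum_ext n (fun l => H i l * XX n A G Gm Q gamma v l T)
               (fun l => rsum n (fun k => H i l * matexp (2 * n) (Hcal n A G Gm Q gamma) T l (k + n)%nat * v k))).
    2:{ intros l Hl. rewrite XX_split, <- rsum_scal. apply rsum_ext; intros; ring. }
    rewrite rsum_swap. apply Rminus_diag_uniq. rewrite <- rsum_minus.
    change R0 with (IZR 0) in Hv. rewrite <- Hv. apply rsum_ext; intros k Hk. rewrite Rmult_minus_distr_r, rsum_mulr. reflexivity. }
  assert (FT : F T = qform n H (z T)).
  { unfold F, qform. apply rsum_ext; intros i Hi. rewrite Hp by auto. rewrite <- rsum_scal.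
    apply rsum_ext; intros; unfold z; ring. }
  assert (HJ : RiemannInt prJ = qform n H (z T)).
  { rewrite <- RInt_Reals. rewrite HI, F0, FT. ring. }
  assert (HS : RiemannInt prg <= 0).
  { change (RiemannInt prJ - qform n H (z T) >= eps * RiemannInt prg) in HH. rewrite HJ in HH. assert (eps * RiemannInt prg <= 0) by lra.
    destruct (Rle_or_lt (RiemannInt prg) 0); auto. exfalso. pose proof (Rmult_lt_0_compat eps _ Heps H1). lra. }
  intros j Hj. apply NNPP; intros Hvj.
  assert (Hpos : 0 < RInt S 0 T).
  { apply int_pos; auto.
    - intros x. unfold S, sqnorm. apply rsum_nonneg; intros. apply Rle_0_sqr.
    - unfold S, sqnorm. apply (rsum_pos n _ j); auto.
      intros; apply Rle_0_sqr.
      unfold g, X. rewrite XX_0' by auto.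
      assert (gamma * v j <> 0) by (apply Rmult_integral_contrapositive; split; lra).
      apply Rsqr_pos_lt in H0. exact H0. }
  rewrite (RInt_Reals S 0 T prg) in Hpos. lra.
Qed.
From mathcomp Require all_boot all_algebra Rstruct.

Definition inj_prop (n : nat) (K : mat) : Prop :=
  forall v : vec, (forall i, lt i n -> mat_vec n K v i = R0) -> forall j, lt j n -> v j = R0.

Module LA.
Import all_boot all_algebra Rstruct.
Import GRing.Theory.
Local Open Scope ring_scope.

Lemma rsum_big (m : nat) (f : nat -> R) : rsum m f = \sum_(k < m) f k.
Proof.
elim: m => [|m IH]; first by rewrite big_ord0.
by rewrite big_ord_recr /= IH.
Qed.

Lemma inj_nonsing (n : nat) (K : mat) : inj_prop n K -> nonsingular n K.
Proof.
move=> HK.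
pose Km : 'M[R]_n := \matrix_(i < n, j < n) K i j.
have Hu : Km \in unitmx.
  rewrite -unitmx_tr -row_free_unit -kermx_eq0; apply/eqP/row_matrixP => i.
  rewrite row0.
  set u := row i (kermx Km^T).
  have Hu : u *m Km^T = 0 by apply/sub_kermxP; rewrite row_sub.
  clearbody u.
  pose v : vec := fun k => oapp (fun o : 'I_n => u 0 o) 0 (insub k).
  have Hv : forall i0, lt i0 n -> mat_vec n K v i0 = R0.
    move=> i0 /ltP hi0.
    rewrite /mat_vec rsum_big.
    have := congr1 (fun M : 'M[R]_(1,n) => M 0 (Ordinal hi0)) Hu.
    rewrite !mxE => E; apply: etrans E; apply: eq_bigr => k _.
    by rewrite !mxE /v /= valK /= mulrC.
  apply/rowP => j; rewrite !mxE.
  have := HK v Hv j (ltP (ltn_ord j)).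
  by rewrite /v valK.
pose N : mat := fun i j => oapp (fun o : 'I_n => oapp (fun o' : 'I_n => invmx Km o o') 0 (insub j)) 0 (insub i).
exists N => i j /ltP hi /ltP hj.
rewrite /mat_mul !rsum_big.
have E1 := congr1 (fun M : 'M[R]_n => M (Ordinal hi) (Ordinal hj)) (mulVmx Hu).
have E2 := congr1 (fun M : 'M[R]_n => M (Ordinal hi) (Ordinal hj)) (mulmxV Hu).
rewrite !mxE in E1 E2.
have Hd : delta i j = ((Ordinal hi == Ordinal hj)%:R : R).
  rewrite /delta -[Ordinal hi == _]/(i == j).
  by case: (PeanoNat.Nat.eqb_spec i j) => [->|/eqP/negbTE ->]; rewrite ?eqxx.
split.
- rewrite Hd -E1; apply: eq_bigr => k _.
  by rewrite /N !mxE /= (valK (Ordinal hi)) valK.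
- rewrite Hd -E2; apply: eq_bigr => k _.
  by rewrite /N !mxE /= (valK (Ordinal hj)) valK.
Qed.
End LA.

Theorem proposition7 (n : nat) (T : R) (A G Gm : mat) (gamma : R) (Q H : mat)
  (hn : (1 <= n)%nat) (hT : 0 < T) (hgamma : 0 < gamma)
  (hQs : symmetric n Q) (hQ : psd n Q) (hHs : symmetric n H) (hH : psd n H)
  (hH1 : H1 n T A G Gm gamma Q H) :
  nonsingular n
    (mat_sub (blk22 n (matexp (2 * n)%nat (Hcal n A G Gm Q gamma) T))
             (mat_mul n H (blk12 n (matexp (2 * n)%nat (Hcal n A G Gm Q gamma) T)))).
Proof.
  apply LA.inj_nonsing. unfold inj_prop. intros v Hv j Hj.
  exact (kernel_zero n T A G Gm gamma Q H hT hgamma hH1 v Hv j Hj).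
Qed.
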